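(* Let $H$ be a real symmetric $n\times n$ matrix and let $\lambda_1,\dotsc,\lambda_n$ be its eigenvalues, listed with multiplicity and in order of decreasing absolute value. Let $C\geq 1$ and $B\geq 1$, and suppose $|\lambda_1|\leq CB$. Put \[ N_H(B)=\#\{\vec{y}\in\mathbb{Z}^n:\ \|\vec{y}\|\leq B,\ \|H\vec{y}\|\leq B\}. \] Then there is a constant $A$ depending only on $C$ and $n$ such that \[ N_H(B)\leq A\min_{1\leq i\leq n}\frac{B^n}{1+|\lambda_1\cdots\lambda_i|}. \]
   Context: $\|\vec{t}\|=\max_i|t_i|$ denotes the supremum norm on $\mathbb{R}^n$. *)

(* Defs.v *)
From HB Require Import structures.
From mathcomp Require Import all_boot all_order all_algebra.
From mathcomp Require Import reals.
Set Implicit Arguments. Unset Strict Implicit. Unset Printing Implicit Defensive.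
Import Order.TTheory GRing.Theory Num.Theory.
Local Open Scope ring_scope.

Definition supnorm (R : realType) (n : nat) (v : 'cV[R]_n) : R :=
  \big[Num.max/0]_(i < n) `|v i ord0|.

Definition intvec (R : realType) (n : nat) (y : 'cV[int]_n) : 'cV[R]_n :=
  map_mx (fun z : int => z%:~R) y.

Definition int_box (n m : nat) : seq 'cV[int]_n :=
  undup [seq \col_i (((f i : nat)%:Z) - (m%:Z)) | f : {ffun 'I_n -> 'I_(m + m).+1}].

(* N_H(B) = #{ y in Z^n : ||y|| <= B, ||H y|| <= B }.  Every such y lies in the
   cube [-m, m]^n with m = truncn B, so counting inside that cube is exact. *)
Definition NH (R : realType) (n : nat) (H : 'M[R]_n) (B : R) : nat :=
  count (fun y : 'cV[int]_n =>
           (supnorm (intvec R y) <= B) && (supnorm (H *m intvec R y) <= B))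
        (int_box n (Num.truncn B)).

(* Main.v *)
Require Import Defs.
From HB Require Import structures.
From mathcomp Require Import all_boot all_order all_algebra.
From mathcomp Require Import reals ring lra zify.
Import Order.TTheory GRing.Theory Num.Theory.
Local Open Scope ring_scope.

Section PolyPart.
Variable R : comNzRingType.

Lemma charpoly_comp n (A : 'M[R]_n) q :
  (char_poly A) \Po q = \det (q%:M - map_mx polyC A).
Proof.
rewrite /char_poly -[_ \Po q]/(comp_poly q _) -det_map_mx; congr (\det _).
apply/matrixP => i j; rewrite !mxE rmorphB rmorphMn /= comp_polyX comp_polyC //.
Qed.

Lemma charpoly_horner n (A : 'M[R]_n) x :
  (char_poly A).[x] = \det (x%:M - A).
Proof.
rewrite /char_poly -horner_evalE -det_map_mx; congr (\det _).
apply/matrixP => i j; rewrite !mxE rmorphB rmorphMn /= !horner_evalE hornerX hornerC //.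
Qed.

Lemma prodN_seq (s : seq R) (f : R -> R) :
  \prod_(x <- s) - f x = (-1) ^+ size s * \prod_(x <- s) f x.
Proof.
elim: s => [|x s IH]; first by rewrite !big_nil mul1r.
by rewrite !big_cons IH exprS; ring.
Qed.

Lemma prodN_seqP (s : seq R) (f : R -> {poly R}) :
  \prod_(x <- s) - f x = (-1) ^+ size s * \prod_(x <- s) f x.
Proof.
elim: s => [|x s IH]; first by rewrite !big_nil mul1r.
by rewrite !big_cons IH exprS; ring.
Qed.

Lemma charpoly_sq n (H : 'M[R]_n) (lam : seq R) :
  char_poly H = \prod_(x <- lam) ('X - x%:P) ->
  char_poly (H *m H) = \prod_(x <- lam) ('X - (x ^+ 2)%:P).
Proof.
move=> cH.
have sz : size lam = n.
  by have := size_char_poly H; rewrite cH size_prod_XsubC => -[].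
set Hp := map_mx polyC H.
have E1 : (char_poly (H *m H)) \Po 'X^2 =
    char_poly H * \det ('X%:M + Hp).
  rewrite charpoly_comp map_mxM -/Hp /char_poly /char_poly_mx -/Hp -det_mulmx.
  congr (\det _).
  rewrite mulmxDr !mulmxBl -scalar_mxM -expr2 mul_mx_scalar mul_scalar_mx.
  by rewrite addrA subrK.
have E2 : \det ('X%:M + Hp) = (-1) ^+ n * ((char_poly H) \Po (- 'X)).
  rewrite charpoly_comp -/Hp -detZ; congr (\det _).
  by rewrite scaleN1r opprB raddfN /= opprK addrC.
have E3 : (char_poly (H *m H)) \Po 'X^2 =
   (\prod_(x <- lam) ('X - (x ^+ 2)%:P)) \Po 'X^2.
  rewrite E1 E2 cH rmorph_prod /= rmorph_prod /=.
  have -> : \prod_(i <- lam) comp_poly (- 'X) ('X - i%:P)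
     = \prod_(i <- lam) - ('X + i%:P).
    by apply: eq_bigr => x _; rewrite /= comp_polyB comp_polyX comp_polyC opprD.
  have sg : (-1) ^+ n * (-1) ^+ n = 1 :> {poly R}.
    by rewrite -exprMn mulrNN mulr1 expr1n.
  rewrite prodN_seqP sz [(-1) ^+ n * (_ * _)]mulrA sg mul1r.
  rewrite -big_split /=.
  apply: eq_bigr => x _; rewrite /= comp_polyB comp_polyX comp_polyC rmorphXn /=.
  ring.
apply/polyP => i.
have := congr1 (fun p : {poly R} => p`_(2 * i)%N) E3.
by rewrite /= !coef_comp_poly_Xn // dvdn_mulr // mulKn.
Qed.

End PolyPart.

Section RealPart.
Variable R : realType.

Lemma size_lam n (H : 'M[R]_n) (lam : seq R) :
  char_poly H = \prod_(x <- lam) ('X - x%:P) -> size lam = n.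
Proof. by move=> cH; have := size_char_poly H; rewrite cH size_prod_XsubC => -[]. Qed.

Lemma trace_sq n (H : 'M[R]_n) (lam : seq R) :
  char_poly H = \prod_(x <- lam) ('X - x%:P) ->
  \tr (H *m H) = \sum_(x <- lam) x ^+ 2.
Proof.
move=> cH; have sz := size_lam _ _ _ cH.
case: n H cH sz => [|n] H cH sz.
  by rewrite /mxtrace big_ord0; case: lam sz cH => // _ _; rewrite big_nil.
have := char_poly_trace (H *m H) (ltn0Sn n).
rewrite (charpoly_sq _ _ _ _ cH) -(big_map (fun x => x ^+ 2) xpredT (fun p => 'X - p%:P)).
have szm : size (map (fun x => x ^+ 2) lam) = n.+1 by rewrite size_map.
rewrite -{1}[n]/(n.+1.-1) -{1}szm coefPn_prod_XsubC ?szm // big_map.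
by move/eqP; rewrite eqr_opp => /eqP.
Qed.

Lemma det_sq n (H : 'M[R]_n) (lam : seq R) (c : R) :
  char_poly H = \prod_(x <- lam) ('X - x%:P) ->
  \det (c%:M + H *m H) = \prod_(x <- lam) (c + x ^+ 2).
Proof.
move=> cH; have sz := size_lam _ _ _ cH.
have := charpoly_horner _ _ (H *m H) (- c).
rewrite (charpoly_sq _ _ _ _ cH) horner_prod.
have -> : (- c)%:M - H *m H = (-1) *: (c%:M + H *m H).
  by rewrite scaleN1r opprD raddfN.
rewrite detZ.
have -> : \prod_(i <- lam) ('X - (i ^+ 2)%:P).[- c] = \prod_(i <- lam) - (c + i ^+ 2).
  by apply: eq_bigr => x _; rewrite hornerXsubC opprD.
rewrite prodN_seq sz => E.
have sg : (-1) ^+ n * (-1) ^+ n = 1 :> R by rewrite -exprMn mulrNN mulr1 expr1n.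
by rewrite -[LHS]mul1r -sg -mulrA -E mulrA sg mul1r.
Qed.

End RealPart.

Definition qf {R : realType} {n} (Q : 'M[R]_n) (v : 'cV[R]_n) : R := (v^T *m Q *m v) 0 0.

Lemma size_fibers (T U : eqType) (f : T -> U) (s : seq T) (t : seq U) :
  uniq t -> {subset map f s <= t} ->
  size s = (\sum_(u <- t) count (fun x => f x == u) s)%N.
Proof.
move=> Ut; elim: s => [|x s IH] Hs.
  by rewrite big1_seq.
rewrite /= big_split /= -IH; last by move=> u us; apply: Hs; rewrite inE us orbT.
have fx : f x \in t by apply: Hs; rewrite inE eqxx.
rewrite (perm_big _ (perm_to_rem fx)) big_cons eqxx big1_seq ?addn0 ?add1n //.
move=> u /andP[_ uin]; case: eqP => // E; move: uin; rewrite -E.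
by rewrite mem_rem_uniqF.
Qed.

Section RB.
Variable R : realType.

Lemma int_interval (zs : seq int) (c r : R) : 0 <= r -> uniq zs ->
  (forall z, z \in zs -> `|z%:~R + c| <= r) -> (size zs)%:R <= 1 + 4 * r.
Proof.
case: zs => [|z0 zs] r0 U Hz; first by rewrite /=; lra.
set k := Num.truncn (2 * r).
have [hk1 hk2] : (k%:R <= 2 * r /\ 2 * r < k.+1%:R).
  have r20 : 0 <= 2 * r by lra.
  by have /andP[] := truncn_itv r20.
have hk : forall z, z \in z0 :: zs -> `|z - z0| <= k%:Z.
  move=> z zin.
  have h1 := Hz z zin; have h2 := Hz z0 (mem_head _ _).
  have : (`|z - z0|%:~R : R) < (k.+1 : int)%:~R.
    rewrite intr_norm rmorphB /=.
    have -> : (z%:~R - z0%:~R : R) = (z%:~R + c) - (z0%:~R + c) by ring.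
    apply: le_lt_trans (ler_normB _ _) _.
    by rewrite -[(k.+1 : int)%:~R]/(k.+1%:R); lra.
  rewrite ltr_int => h; lia.
set f := fun z : int => absz (z - z0 + k%:Z)%R.
have Uf : uniq (map f (z0 :: zs)).
  rewrite map_inj_in_uniq // => x y xin yin; rewrite /f => E.
  have := hk x xin; have := hk y yin; lia.
have sub : {subset map f (z0 :: zs) <= iota 0 (2 * k).+1}.
  move=> u /mapP [z zin ->]; rewrite mem_iota add0n /f.
  have := hk z zin; lia.
have := uniq_leq_size Uf sub; rewrite size_map size_iota => hs.
apply: le_trans (_ : ((2 * k).+1)%:R <= _); first by rewrite ler_nat.
rewrite -addn1 natrD natrM; lra.
Qed.

End RB.

Lemma intvec_col (R : realType) n (y : 'cV[int]_(1 + n)) :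
  intvec R y = col_mx ((y 0 0)%:~R)%:M (intvec R (dsubmx y)).
Proof.
apply/colP => i; rewrite !mxE; case: splitP => j hj; rewrite !mxE.
  by rewrite ord1 eqxx mulr1n; congr (_ %:~R); congr (y _ _); apply: val_inj; rewrite /= hj ord1.
by congr (_ %:~R); congr (y _ _); apply: val_inj.
Qed.

Lemma sum_le_const (R : realType) (T : eqType) (t : seq T) (f : T -> nat) (rho : R) :
  (forall u, u \in t -> (f u)%:R <= rho) ->
  (\sum_(u <- t) f u)%N%:R <= (size t)%:R * rho.
Proof.
elim: t => [|u t IH] H; first by rewrite big_nil mul0r.
rewrite big_cons natrD /= -addn1 natrD mulrDl mul1r addrC.
apply: lerD; first by apply: IH => v vt; apply: H; rewrite inE vt orbT.
by apply: H; rewrite inE eqxx.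
Qed.

Section Step.
Variable R : realType.
Variable n : nat.
Variable Q : 'M[R]_(1 + n).
Hypothesis Qs : Q^T = Q.

Let a := Q 0 0.
Let b : 'M[R]_(1, n) := ursubmx Q.
Let Qd := drsubmx Q.
Definition schur := Qd - a^-1 *: (b^T *m b).

Lemma Qsym i j : Q i j = Q j i.
Proof. by rewrite -{1}Qs mxE. Qed.

Lemma Qblock : Q = block_mx (a%:M) b b^T Qd.
Proof.
rewrite -{1}[Q]submxK; congr block_mx.
  apply/matrixP => i j; rewrite !ord1 !mxE /a /=; congr (Q _ _); exact: val_inj.
by apply/matrixP => i j; rewrite !mxE Qsym.
Qed.

Lemma qf_col (x : R) (w : 'cV[R]_n) :
  qf Q (col_mx x%:M w) = a * x ^+ 2 + 2 * x * (b *m w) 0 0 + qf Qd w.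
Proof.
rewrite /qf {1}Qblock tr_col_mx tr_scalar_mx mul_row_block mul_row_col.
rewrite !mxE !big_ord1 !mxE eqxx /= !mulr1n.
rewrite big_ord1 mul_scalar_mx.
have e1 : \sum_(j < n) w^T 0 j * b^T j ord0 = \sum_(j < n) b 0 j * w j 0.
  by apply: eq_bigr => j _; rewrite !mxE mulrC.
have e2 : \sum_(j < n) (x *: b + w^T *m Qd) 0 j * w j 0 =
   x * \sum_(j < n) b 0 j * w j 0 + \sum_(j < n) (w^T *m Qd) 0 j * w j 0.
  rewrite mulr_sumr -big_split; apply: eq_bigr => j _; rewrite !mxE /= mulrDl mulrA //.
rewrite e1 e2 !mxE eqxx /= !mulr1n; ring.
Qed.

Lemma qf_schur (w : 'cV[R]_n) :
  qf schur w = qf Qd w - a^-1 * ((b *m w) 0 0) ^+ 2.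
Proof.
have E : w^T *m (a^-1 *: (b^T *m b)) *m w = a^-1 *: ((b *m w)^T *m (b *m w)).
  rewrite trmx_mul. 
  by rewrite -scalemxAr -scalemxAl !mulmxA.
rewrite /qf /schur mulmxBr mulmxBl E.
rewrite [LHS]mxE [X in _ + X]mxE [X in _ - X]mxE; congr (_ - (_ * _)).
by rewrite mxE big_ord1 mxE expr2.
Qed.

Lemma a_gt0 : (forall v, v != 0 -> 0 < qf Q v) -> 0 < a.
Proof.
move=> PD.
have nz : col_mx (1%:M : 'M[R]_1) (0 : 'cV_n) != 0.
  by rewrite col_mx_eq0 negb_and; apply/orP; left; apply: (@oner_neq0 _).
have := PD _ nz; rewrite qf_col /qf mulmx0 trmx0 !mul0mx !mxE expr1n; lra.
Qed.

Lemma qf_decomp (x : R) (w : 'cV[R]_n) : a != 0 ->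
  qf Q (col_mx x%:M w) = a * (x + a^-1 * (b *m w) 0 0) ^+ 2 + qf schur w.
Proof.
move=> a0; rewrite qf_col qf_schur; field; exact: a0.
Qed.

Lemma det_schur : a != 0 -> \det Q = a * \det schur.
Proof.
move=> a0.
have E : Q = block_mx (1%:M : 'M_1) 0 (a^-1 *: b^T) 1%:M *m block_mx (a%:M) b 0 schur.
  rewrite mulmx_block !mul0mx !mul1mx ?mulmx0 !addr0 ?add0r.
  rewrite -scalemxAl mul_mx_scalar scalerA mulVf // scale1r.
  by rewrite /schur scalemxAl addrC subrK -Qblock.
by rewrite E det_mulmx det_lblock det_ublock !det1 !mul1r det_scalar1.
Qed.

Lemma schur_sym : schur^T = schur.
Proof.
rewrite /schur linearB /= linearZ /= trmx_mul trmxK; congr (_ - _).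
by apply/matrixP => i j; rewrite !mxE Qsym.
Qed.

Lemma schur_diag k : 0 < a -> schur k k <= Q (rshift 1 k) (rshift 1 k).
Proof.
move=> a0; rewrite /schur !mxE big_ord1 !mxE.
set q := Q (lshift n ord0) (rshift 1 k).
have : 0 <= a^-1 * (q * q) by apply: mulr_ge0; [rewrite invr_ge0 ltW | rewrite -expr2 sqr_ge0].
lra.
Qed.

Lemma schur_pd : (forall v, v != 0 -> 0 < qf Q v) ->
  forall w, w != 0 -> 0 < qf schur w.
Proof.
move=> PD w w0; have a0 := a_gt0 PD.
have := PD (col_mx (- (a^-1 * (b *m w) 0 0))%:M w).
rewrite qf_decomp ?gt_eqF // addNr expr0n /= mulr0 add0r; apply.
by rewrite col_mx_eq0 negb_and w0 orbT.
Qed.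

Hypothesis IH : forall (Q' : 'M[R]_n) (r2 : R) (s : seq 'cV[int]_n),
  0 <= r2 -> Q'^T = Q' -> (forall v, v != 0 -> 0 < qf Q' v) ->
  (forall k, Q' k k <= 2 * r2) -> uniq s ->
  (forall y, y \in s -> qf Q' (intvec R y) <= r2) ->
  0 < \det Q' /\ (size s)%:R ^+ 2 * \det Q' <= (36 * r2) ^+ n.

Lemma step_count (r2 : R) (s : seq 'cV[int]_(1 + n)) :
  0 <= r2 -> (forall v, v != 0 -> 0 < qf Q v) ->
  (forall k, Q k k <= 2 * r2) -> uniq s ->
  (forall y, y \in s -> qf Q (intvec R y) <= r2) ->
  0 < \det Q /\ (size s)%:R ^+ 2 * \det Q <= (36 * r2) ^+ (1 + n).
Proof.
move=> r0 PD Qdg Us Hs.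
have a0 := a_gt0 PD.
have an0 : a != 0 by rewrite gt_eqF.
pose c (y' : 'cV[int]_n) := a^-1 * (b *m intvec R y') 0 0.
have Hq : forall y, qf Q (intvec R y) =
    a * ((y 0 0)%:~R + c (dsubmx y)) ^+ 2 + qf schur (intvec R (dsubmx y)).
  by move=> y; rewrite intvec_col qf_decomp.
set t := undup (map (fun y => dsubmx y) s).
have [dS hIH] : 0 < \det schur /\ (size t)%:R ^+ 2 * \det schur <= (36 * r2) ^+ n.
  apply: IH => //.
  - exact: schur_sym.
  - exact: schur_pd.
  - move=> k; apply: le_trans (schur_diag k a0) _; exact: Qdg.
  - exact: undup_uniq.
  move=> y'; rewrite mem_undup => /mapP [y ys ->].
  apply: le_trans (Hs y ys); rewrite Hq lerDr.
  by apply: mulr_ge0; [exact: ltW | exact: sqr_ge0].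
have dQ : \det Q = a * \det schur by exact: det_schur.
split; first by rewrite dQ mulr_gt0.
set rho := 1 + 4 * Num.sqrt (r2 / a).
have fib : forall y', y' \in t -> (count (fun y => dsubmx y == y') s)%:R <= rho.
  move=> y' _; rewrite -size_filter.
  set F := filter _ s.
  have -> : size F = size (map (fun y : 'cV[int]_(1 + n) => y 0 0) F) by rewrite size_map.
  apply: (@int_interval R _ (c y') (Num.sqrt (r2 / a))).
  - exact: sqrtr_ge0.
  - rewrite map_inj_in_uniq ?filter_uniq // => y1 y2.
    rewrite !mem_filter => /andP[/eqP e1 _] /andP[/eqP e2 _] e.
    rewrite -(vsubmxK y1) -(vsubmxK y2) e1 e2; congr col_mx.
    apply/matrixP => i j; rewrite !ord1 !mxE.
    have -> : lshift n (0 : 'I_1) = 0 by apply: val_inj.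
    exact: e.
  - move=> z /mapP [y]; rewrite mem_filter => /andP[/eqP e ys] ->.
    have h := Hs y ys; rewrite Hq e in h.
    have hs : 0 <= qf schur (intvec R y').
      case: (eqVneq (intvec R y') 0) => [->|nz].
        by rewrite /qf mulmx0 mxE.
      exact: ltW (schur_pd PD _ nz).
    rewrite -sqrtr_sqr ler_wsqrtr // ler_pdivlMr //; lra.
have hsz : (size s)%:R <= (size t)%:R * rho.
  rewrite (@size_fibers _ _ (fun y => dsubmx y) s t) ?undup_uniq //.
    exact: sum_le_const.
  by move=> u uin; rewrite mem_undup.
have rho0 : 0 <= rho by rewrite /rho; have := sqrtr_ge0 (r2 / a); lra.
set sq := Num.sqrt (r2 / a) in rho rho0 hsz fib *.
have sq0 : 0 <= sq by exact: sqrtr_ge0.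
have sq2 : sq ^+ 2 * a = r2.
  rewrite sqr_sqrtr; [by field | exact: divr_ge0 r0 (ltW a0)].
have aa : a <= 2 * r2 by exact: Qdg.
have hr : rho ^+ 2 * a <= 36 * r2.
  rewrite /rho; nra.
have N2 : (size s)%:R ^+ 2 <= (size t)%:R ^+ 2 * rho ^+ 2.
  by rewrite -exprMn !expr2; apply: ler_pM.
have -> : (36 * r2) ^+ (1 + n) = (36 * r2) ^+ n * (36 * r2).
  by rewrite addnC exprD expr1.
rewrite dQ.
apply: le_trans (_ : (size t)%:R ^+ 2 * rho ^+ 2 * (a * \det schur) <= _).
  by apply: ler_wpM2r => //; apply: mulr_ge0; [exact: ltW | exact: ltW].
have -> : (size t)%:R ^+ 2 * rho ^+ 2 * (a * \det schur) =
   ((size t)%:R ^+ 2 * \det schur) * (rho ^+ 2 * a) by ring.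
apply: ler_pM => //.
  by apply: mulr_ge0; [exact: sqr_ge0 | exact: ltW].
by apply: mulr_ge0; [exact: sqr_ge0 | exact: ltW].
Qed.

End Step.

Lemma partB (R : realType) n : forall (Q : 'M[R]_n) (r2 : R) (s : seq 'cV[int]_n),
  0 <= r2 -> Q^T = Q -> (forall v, v != 0 -> 0 < qf Q v) ->
  (forall k, Q k k <= 2 * r2) -> uniq s ->
  (forall y, y \in s -> qf Q (intvec R y) <= r2) ->
  0 < \det Q /\ (size s)%:R ^+ 2 * \det Q <= (36 * r2) ^+ n.
Proof.
elim: n => [|n IH] Q r2 s r0 Qs PD Qdg Us Hs.
  rewrite det_mx00 mulr1 expr0; split => //.
  have sub : {subset s <= [:: 0]} by move=> y _; rewrite (flatmx0 y) inE.
  have := uniq_leq_size Us sub => /= hs.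
  have : ((size s)%:R : R) <= 1%:R by rewrite ler_nat.
  have : (0 : R) <= (size s)%:R by [].
  nra.
exact: (@step_count R n Q Qs IH r2 s r0 PD Qdg Us Hs).
Qed.


Section Final.
Variable R : realType.

Lemma le_bigmax_seq n (r : seq 'I_n) (F : 'I_n -> R) i :
  i \in r -> F i <= \big[Num.max/0]_(j <- r) F j.
Proof.
elim: r => // j r IH; rewrite inE big_cons => /orP[/eqP->|/IH h].
  by rewrite le_max lexx.
by rewrite le_max h orbT.
Qed.

Lemma supnorm_ge n (v : 'cV[R]_n) k : `|v k 0| <= supnorm v.
Proof. by rewrite /supnorm; apply: le_bigmax_seq; rewrite mem_index_enum. Qed.

Lemma sumsq_le n (v : 'cV[R]_n) B : supnorm v <= B ->
  \sum_(k < n) (v k 0) ^+ 2 <= n%:R * B ^+ 2.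
Proof.
move=> hB.
apply: le_trans (_ : \sum_(k < n) B ^+ 2 <= _).
  apply: ler_sum => k _.
  have h := le_trans (supnorm_ge _ v k) hB; have := normr_ge0 (v k 0).
  rewrite -real_normK ?num_real //; nra.
by rewrite sumr_const card_ord mulr_natl.
Qed.

Lemma qfQ n (H : 'M[R]_n) c v : H^T = H ->
  qf (c%:M + H *m H) v = c * \sum_(k < n) (v k 0) ^+ 2 + \sum_(k < n) ((H *m v) k 0) ^+ 2.
Proof.
move=> HT.
have E : v^T *m (H *m H) *m v = (H *m v)^T *m (H *m v) by rewrite trmx_mul HT !mulmxA.
rewrite /qf mulmxDr mulmxDl E mul_mx_scalar -scalemxAl !mxE; congr (_ * _ + _).
  by apply: eq_bigr => k _; rewrite !mxE expr2.
by apply: eq_bigr => k _; rewrite !mxE expr2.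
Qed.

Lemma sum_seq_le (t : seq R) (f : R -> R) (c : R) :
  (forall x, x \in t -> f x <= c) -> \sum_(x <- t) f x <= (size t)%:R * c.
Proof.
elim: t => [|u t IH] H; first by rewrite big_nil mul0r.
rewrite big_cons /= -addn1 natrD mulrDl mul1r addrC.
apply: lerD; first by apply: IH => v vt; apply: H; rewrite inE vt orbT.
by apply: H; rewrite inE eqxx.
Qed.

Lemma le_sum_term n (F : 'I_n -> R) k : (forall j, 0 <= F j) -> F k <= \sum_(j < n) F j.
Proof.
move=> F0; rewrite (bigD1 k) //= lerDl; apply: sumr_ge0 => j _; exact: F0.
Qed.

End Final.

Arguments size_lam {R n H lam}.
Arguments trace_sq {R n H lam}.
Arguments det_sq {R n H lam}.
Arguments sumsq_le {R n v B}.
Arguments le_sum_term {R n} F k.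

Theorem lemma2p1 (R : realType) (n : nat) (C : R) : 1 <= C ->
  exists A : R, forall (H : 'M[R]_n) (lam : seq R) (B : R),
    H^T = H ->
    (* lam = eigenvalues of H with multiplicity ... *)
    char_poly H = \prod_(x <- lam) ('X - x%:P) ->
    (* ... listed in order of decreasing absolute value *)
    sorted (fun a b => `|b| <= `|a|) lam ->
    1 <= B ->
    `|lam`_0| <= C * B ->
    forall i : nat, (1 <= i <= n)%N ->
      (NH H B)%:R <= A * (B ^+ n / (1 + `|\prod_(j < i) lam`_j|)).
Proof.
move=> C1.
set K := (36 * (n%:R * (C ^+ 2 + 1))) ^+ n.
exists (2 * K).
move=> H lam B HT cH srt B1 l0 i /andP[i1 iN].
have n0 : (0 < n)%N by apply: leq_trans i1 iN.
have sz := size_lam cH.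
have Hs : forall i j, H i j = H j i by move=> i' j'; rewrite -{1}HT mxE.
have lamB : forall x, x \in lam -> `|x| <= C * B.
  case: lam srt l0 {cH sz} => // l0' l srt l0 x; rewrite inE => /orP[/eqP->//|xl].
  have tr : transitive (fun a b : R => `|b| <= `|a|).
    by move=> y x' z h1 h2; exact: le_trans h2 h1.
  have := order_path_min tr srt => /allP/(_ x xl) /= h; exact: le_trans h l0.
set Q := (C ^+ 2)%:M + H *m H.
set r2 := n%:R * (C ^+ 2 + 1) * B ^+ 2.
set P := fun y : 'cV[int]_n =>
  (supnorm (intvec R y) <= B) && (supnorm (H *m intvec R y) <= B).
set s := filter P (int_box n (Num.truncn B)).
have NHe : NH H B = size s by rewrite size_filter.
have nR : 1 <= (n%:R : R) by rewrite ler1n.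
have r0 : 0 <= r2 by rewrite /r2; apply: mulr_ge0; [apply: mulr_ge0|]; nra.
have [D0 hB] : 0 < \det Q /\ (size s)%:R ^+ 2 * \det Q <= (36 * r2) ^+ n.
  apply: partB => //.
  - by rewrite /Q linearD /= tr_scalar_mx trmx_mul HT.
  - move=> v v0; rewrite qfQ //.
    have [k vk] : exists k, v k 0 != 0.
      apply/existsP; apply: contraNT v0; rewrite negb_exists => /forallP h.
      by apply/eqP/colP => k; rewrite mxE; apply/eqP; have := h k; rewrite negbK.
    have h1 : 0 < (v k 0) ^+ 2 by rewrite exprn_even_gt0 // vk orbT.
    have h2 := le_sum_term (fun j => (v j 0) ^+ 2) k (fun j => sqr_ge0 _).
    have h3 : 0 <= \sum_(k < n) ((H *m v) k 0) ^+ 2 by apply: sumr_ge0 => j _; exact: sqr_ge0.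
    rewrite /= in h2.
    have hs := lt_le_trans h1 h2.
    have hC : 0 < C ^+ 2 by apply: exprn_gt0; apply: lt_le_trans ltr01 C1.
    have := mulr_gt0 hC hs; lra.
  - move=> k; rewrite /Q !mxE eqxx mulr1n.
    have e1 : \sum_j H k j * H j k = \sum_j (H k j) ^+ 2.
      by apply: eq_bigr => j _; rewrite (Hs j k) expr2.
    have e2 : \sum_j (H k j) ^+ 2 <= \tr (H *m H).
      have -> : \tr (H *m H) = \sum_(k' < n) \sum_(j < n) (H k' j) ^+ 2.
        rewrite /mxtrace; apply: eq_bigr => k' _; rewrite mxE.
        by apply: eq_bigr => j _; rewrite (Hs j k') expr2.
      apply: (le_sum_term (fun k' => \sum_(j < n) (H k' j) ^+ 2) k) => k'.
      by apply: sumr_ge0 => j _; exact: sqr_ge0.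
    have e3 : \tr (H *m H) <= n%:R * (C * B) ^+ 2.
      rewrite (trace_sq cH) -sz; apply: sum_seq_le => x xl.
      have h := lamB x xl; have := normr_ge0 x.
      rewrite -real_normK ?num_real //; nra.
    rewrite e1 /r2; rewrite exprMn in e3.
    have c20 : 0 <= C ^+ 2 by exact: sqr_ge0.
    have b21 : 1 <= B ^+ 2 by exact: exprn_ege1.
    have nb : 1 <= n%:R * B ^+ 2 by nra.
    have hc : C ^+ 2 <= C ^+ 2 * (n%:R * B ^+ 2) by nra.
    lra.
  - by rewrite filter_uniq // undup_uniq.
  - move=> y; rewrite mem_filter => /andP[/andP[h1 h2] _].
    rewrite qfQ //.
    have := sumsq_le h1; have := sumsq_le h2; rewrite /r2.
    have : 0 <= C ^+ 2 by exact: sqr_ge0.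
    nra.
have dQ : \det Q = \prod_(x <- lam) (C ^+ 2 + x ^+ 2) by exact: det_sq.
set p := \prod_(j < i) lam`_j.
have F1 : forall j, 1 <= C ^+ 2 + lam`_j ^+ 2.
  move=> j; have := sqr_ge0 lam`_j; have : 1 <= C ^+ 2 by exact: exprn_ege1.
  lra.
have [D1 Dp] : 1 <= \det Q /\ p ^+ 2 <= \det Q.
  rewrite dQ (big_nth 0) sz (big_cat_nat (leq0n i) iN) /=.
  have h1 : 1 <= \prod_(i <= j < n) (C ^+ 2 + lam`_j ^+ 2).
    apply: le_trans (_ : \prod_(i <= j < n) (1 : R) <= _).
      by rewrite big1.
    by apply: ler_prod => j _; rewrite ler01 F1.
  have h3 : 1 <= \prod_(0 <= j < i) (C ^+ 2 + lam`_j ^+ 2).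
    apply: le_trans (_ : \prod_(0 <= j < i) (1 : R) <= _).
      by rewrite big1.
    by apply: ler_prod => j _; rewrite ler01 F1.
  have h2 : p ^+ 2 <= \prod_(0 <= j < i) (C ^+ 2 + lam`_j ^+ 2).
    rewrite /p -prodrXl -(big_mkord xpredT (fun j => lam`_j ^+ 2)).
    apply: ler_prod => j _; rewrite sqr_ge0 /=.
    have : 1 <= C ^+ 2 by exact: exprn_ege1.
    lra.
  split; nra.
rewrite NHe mulrA ler_pdivlMr; last first.
  by have := normr_ge0 p; lra.
set N := (size s)%:R.
set q := `|p|.
have q0 : 0 <= q by exact: normr_ge0.
have q2 : q ^+ 2 = p ^+ 2 by rewrite real_normK ?num_real.
have N0 : 0 <= N by exact: ler0n.
set X := B ^+ n.
have X0 : 1 <= X by exact: exprn_ege1.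
have K1 : 1 <= K.
  apply: exprn_ege1; have : 0 <= C ^+ 2 by exact: sqr_ge0.
  nra.
have hK : (36 * r2) ^+ n = K * X ^+ 2.
  rewrite /r2 /K /X -exprM mulnC exprM -exprMn; congr (_ ^+ n); ring.
rewrite hK in hB.
have e1 : (N * (1 + q)) ^+ 2 <= 4 * (N ^+ 2 * \det Q).
  have : (1 + q) ^+ 2 <= 4 * \det Q by nra.
  rewrite exprMn => h; have := sqr_ge0 N; nra.
have e2 : (N * (1 + q)) ^+ 2 <= (2 * K * X) ^+ 2.
  apply: le_trans e1 _; rewrite !exprMn.
  have : K * X ^+ 2 <= K ^+ 2 * X ^+ 2.
    apply: ler_wpM2r; first exact: sqr_ge0.
    by rewrite expr2; nra.
  nra.
have : 0 <= 2 * K * X by nra.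
have : 0 <= N * (1 + q) by nra.
nra.
Qed.
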